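(* Let $\mathbb{K}$ be a field and let $\mathcal{L}=\{L_1,\ldots,L_d\}$ be a configuration of $d$ mutually distinct lines in $\mathbb{P}^2(\mathbb{K})$, with set of singular points $\{P_1,\ldots,P_s\}$, $s\ge 2$ (points lying on at least two lines of $\mathcal{L}$), where $P_i$ has multiplicity $m_i$ (the number of lines of $\mathcal{L}$ through $P_i$), ordered so that $m_1\ge m_2\ge\cdots\ge m_s$. (a) If $P_1$ and $P_2$ do not lie on a common line of $\mathcal{L}$, then $m_1m_2+2\le s$. (b) If $P_1$ and $P_2$ lie on a common line of $\mathcal{L}$, then $(m_1-1)(m_2-1)+2\le s$. *)

(* Defs.v *)
From HB Require Import structures.
From mathcomp Require Import all_boot all_order all_algebra.
Set Implicit Arguments. Unset Strict Implicit. Unset Printing Implicit Defensive.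
Import GRing.Theory.
Local Open Scope ring_scope.

(* Projective plane P^2(K): points and lines are nonzero vectors of K^3
   (row vectors), considered up to nonzero scalar multiples. *)

Definition proportional (K : fieldType) (u v : 'rV[K]_3) : Prop :=
  exists c : K, c != 0 /\ u = c *: v.

Definition incid (K : fieldType) (P L : 'rV[K]_3) : bool :=
  (P *m L^T) 0 0 == 0.

Definition mult (K : fieldType) (d : nat) (L : 'I_d -> 'rV[K]_3) (P : 'rV[K]_3) : nat :=
  #|[set i : 'I_d | incid P (L i)]|.

Definition line_config (K : fieldType) (d : nat) (L : 'I_d -> 'rV[K]_3) : Prop :=
  (forall i, L i != 0) /\ (forall i j, i != j -> ~ proportional (L i) (L j)).

Definition enumerates_singular_points (K : fieldType) (d : nat)
    (L : 'I_d -> 'rV[K]_3) (s : nat) (P : 'I_s -> 'rV[K]_3) : Prop :=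
  [/\ forall k, P k != 0,
      forall k l, k != l -> ~ proportional (P k) (P l),
      forall k, (2 <= mult L (P k))%N &
      forall Q : 'rV[K]_3, Q != 0 -> (2 <= mult L Q)%N -> exists k, proportional Q (P k)].

(* Main.v *)
From HB Require Import structures.
From mathcomp Require Import all_boot all_order all_algebra.
From mathcomp Require Import ring.
Require Import Defs.
Set Implicit Arguments. Unset Strict Implicit.
Import GRing.Theory.
Local Open Scope ring_scope.
Section S.
Variable K : fieldType.
Definition e0 : 'I_3 := @Ordinal 3 0 isT.
Definition e1 : 'I_3 := @Ordinal 3 1 isT.
Definition e2 : 'I_3 := @Ordinal 3 2 isT.
Definition cx (u : 'rV[K]_3) k := u ord0 k.
Definition dot (u v : 'rV[K]_3) := cx u e0 * cx v e0 + cx u e1 * cx v e1 + cx u e2 * cx v e2.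
Definition cross (u v : 'rV[K]_3) : 'rV[K]_3 := \row_(k < 3)
  (if k == e0 then cx u e1 * cx v e2 - cx u e2 * cx v e1
   else if k == e1 then cx u e2 * cx v e0 - cx u e0 * cx v e2
   else cx u e0 * cx v e1 - cx u e1 * cx v e0).
Lemma cr0 u v : cx (cross u v) e0 = cx u e1 * cx v e2 - cx u e2 * cx v e1.
Proof. by rewrite /cx mxE. Qed.
Lemma cr1 u v : cx (cross u v) e1 = cx u e2 * cx v e0 - cx u e0 * cx v e2.
Proof. by rewrite /cx mxE. Qed.
Lemma cr2 u v : cx (cross u v) e2 = cx u e0 * cx v e1 - cx u e1 * cx v e0.
Proof. by rewrite /cx mxE. Qed.
Lemma cxZ c u k : cx (c *: u) k = c * cx u k.
Proof. by rewrite /cx mxE. Qed.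
Lemma cxB u v k : cx (u - v) k = cx u k - cx v k.
Proof. by rewrite /cx !mxE. Qed.
Lemma cx0 k : cx 0 k = 0.
Proof. by rewrite /cx mxE. Qed.
Lemma ord3_cases (k : 'I_3) : k = e0 \/ k = e1 \/ k = e2.
Proof.
case: k => [[|[|[|n]]] H]; [left|right;left|right;right|]; try by apply: val_inj.
by [].
Qed.
Lemma row3P (u v : 'rV[K]_3) : cx u e0 = cx v e0 -> cx u e1 = cx v e1 -> cx u e2 = cx v e2 -> u = v.
Proof.
move=> h0 h1 h2; apply/rowP => k; case: (ord3_cases k) => [->|[->|->]] //.
Qed.
Lemma incidE (P M : 'rV[K]_3) : (P *m M^T) 0 0 = dot P M.
Proof.
rewrite !mxE !big_ord_recl big_ord0 !mxE addr0 addrA /dot /cx.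
rewrite (_ : lift ord0 (lift ord0 ord0) = e2); last by apply: val_inj.
rewrite (_ : lift ord0 ord0 = e1); last by apply: val_inj.
by rewrite (_ : (ord0 : 'I_3) = e0); last by apply: val_inj.
Qed.
Lemma dotC u v : dot u v = dot v u.
Proof. rewrite /dot; ring. Qed.
Lemma dotZ c u v : dot (c *: u) v = c * dot u v.
Proof. rewrite /dot !cxZ; ring. Qed.
Lemma dot_crossl u v : dot (cross u v) u = 0.
Proof. rewrite /dot cr0 cr1 cr2; ring. Qed.
Lemma dot_crossr u v : dot (cross u v) v = 0.
Proof. rewrite /dot cr0 cr1 cr2; ring. Qed.
Lemma cross_cross a b c : cross (cross a b) c = (dot a c) *: b - (dot b c) *: a.
Proof.
apply: row3P; rewrite ?cr0 ?cr1 ?cr2 !cxB !cxZ ?cr0 ?cr1 ?cr2 /dot; ring.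
Qed.
Lemma crossZ c v : cross (c *: v) v = 0.
Proof. apply: row3P; rewrite ?cr0 ?cr1 ?cr2 !cxZ cx0; ring. Qed.
Lemma vec0 (a : 'rV[K]_3) : a != 0 -> [\/ cx a e0 != 0, cx a e1 != 0 | cx a e2 != 0].
Proof.
move=> an; case: (eqVneq (cx a e0) 0) => h0; last by constructor 1.
case: (eqVneq (cx a e1) 0) => h1; last by constructor 2.
case: (eqVneq (cx a e2) 0) => h2; last by constructor 3.
by case/eqP: an; apply: row3P; rewrite cx0.
Qed.
Lemma cross0_prop (a b : 'rV[K]_3) : a != 0 -> cross a b = 0 -> exists c, b = c *: a.
Proof.
move=> an hc.
have e0' := cr0 a b; have e1' := cr1 a b; have e2' := cr2 a b.
rewrite hc !cx0 in e0' e1' e2'.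
move/esym/eqP: e0'; rewrite subr_eq0 => /eqP q0.
move/esym/eqP: e1'; rewrite subr_eq0 => /eqP q1.
move/esym/eqP: e2'; rewrite subr_eq0 => /eqP q2.
case: (vec0 an) => h.
- exists (cx b e0 / cx a e0); apply: row3P; rewrite cxZ.
  + by field.
  + apply: (mulfI h); rewrite q2; field; done.
  + apply: (mulfI h); rewrite -q1; field; done.
- exists (cx b e1 / cx a e1); apply: row3P; rewrite cxZ.
  + apply: (mulfI h); rewrite -q2; field; done.
  + by field.
  + apply: (mulfI h); rewrite q0; field; done.
- exists (cx b e2 / cx a e2); apply: row3P; rewrite cxZ.
  + apply: (mulfI h); rewrite q1; field; done.
  + apply: (mulfI h); rewrite -q0; field; done.
  + by field.
Qed.
Lemma incid_dot (P M : 'rV[K]_3) : incid P M = (dot P M == 0).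
Proof. by rewrite /incid incidE. Qed.
Lemma prop_incid (P Q M : 'rV[K]_3) : proportional P Q -> incid P M = incid Q M.
Proof.
case=> c [cn ->]; by rewrite !incid_dot dotZ mulf_eq0 (negbTE cn).
Qed.
Lemma crossN0 (a b : 'rV[K]_3) : a != 0 -> b != 0 -> ~ proportional a b -> cross a b != 0.
Proof.
move=> an bn np; apply/eqP => h; case: (cross0_prop an h) => c hc.
have cn : c != 0 by apply: contraNneq bn => c0; rewrite hc c0 scale0r.
apply: np; exists c^-1; split; first by rewrite invr_eq0.
by rewrite hc scalerA mulVf // scale1r.
Qed.
Lemma Zlem (L1 L2 P1 P2 : 'rV[K]_3) : L1 != 0 -> L2 != 0 -> ~ proportional L1 L2 ->
  P1 != 0 -> P2 != 0 -> dot P1 L1 = 0 -> dot P1 L2 = 0 -> dot P2 L1 = 0 -> dot P2 L2 = 0 ->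
  proportional P1 P2.
Proof.
move=> l1 l2 np p1 p2 h11 h12 h21 h22.
have cn := crossN0 l1 l2 np.
have [c1 hc1] : exists c, P1 = c *: cross L1 L2.
  by apply: cross0_prop cn _; rewrite cross_cross (dotC L1) (dotC L2) h11 h12 !scale0r subrr.
have [c2 hc2] : exists c, P2 = c *: cross L1 L2.
  by apply: cross0_prop cn _; rewrite cross_cross (dotC L1) (dotC L2) h21 h22 !scale0r subrr.
have c1n : c1 != 0 by apply: contraNneq p1 => c0; rewrite hc1 c0 scale0r.
have c2n : c2 != 0 by apply: contraNneq p2 => c0; rewrite hc2 c0 scale0r.
exists (c1 / c2); split; first by rewrite mulf_eq0 negb_or c1n invr_eq0 c2n.
by rewrite hc1 hc2 scalerA mulfVK.
Qed.

Variables (d : nat) (L : 'I_d -> 'rV[K]_3) (s : nat) (P : 'I_s -> 'rV[K]_3).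
Hypothesis hL : line_config L.
Hypothesis hP : enumerates_singular_points L P.

Lemma same_line i1 i2 j j' : i1 != i2 -> incid (P i1) (L j) -> incid (P i2) (L j) ->
  incid (P i1) (L j') -> incid (P i2) (L j') -> j = j'.
Proof.
case: hL => Ln Ld; case: hP => Pn Pd _ _.
move=> ni; rewrite !incid_dot => /eqP a /eqP b /eqP c /eqP e.
case: (eqVneq j j') => // nj.
by case: (Pd _ _ ni); apply: (Zlem (Ln j) (Ln j') (Ld _ _ nj)).
Qed.

Lemma same_point k k' i j : i != j -> incid (P k) (L i) -> incid (P k) (L j) ->
  incid (P k') (L i) -> incid (P k') (L j) -> proportional (P k) (P k').
Proof.
case: hL => Ln Ld; case: hP => Pn Pd _ _.
move=> ni; rewrite !incid_dot => /eqP a /eqP b /eqP c /eqP e.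
exact: (Zlem (Ln i) (Ln j) (Ld _ _ ni)).
Qed.

Lemma pt_spec (i0 : 'I_s) i j : i != j ->
  let k := odflt i0 [pick k | cross (cross (L i) (L j)) (P k) == 0] in
  incid (P k) (L i) && incid (P k) (L j).
Proof.
case: hL => Ln Ld; case: hP => Pn Pd Pm Pall.
move=> nij /=.
have Qn := crossN0 (Ln i) (Ln j) (Ld _ _ nij).
case: pickP => [k /eqP hk | hn] /=.
  case: (cross0_prop Qn hk) => c ->.
  by rewrite !incid_dot !dotZ dot_crossl dot_crossr mulr0 eqxx.
exfalso.
have m2 : (2 <= mult L (cross (L i) (L j)))%N.
  rewrite /mult; apply: leq_trans (_ : #|[set i; j]| <= _)%N.
    by rewrite cards2 nij.
  apply: subset_leq_card; apply/subsetP => x; rewrite !inE => /orP[] /eqP ->;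
  by rewrite incid_dot ?dot_crossl ?dot_crossr.
case: (Pall _ Qn m2) => k [c [cn hc]].
by move: (hn k); rewrite hc crossZ eqxx.
Qed.

Lemma core i1 i2 (A B : {set 'I_d}) : i1 != i2 ->
  {in A, forall i, incid (P i1) (L i)} -> {in B, forall j, incid (P i2) (L j)} ->
  {in B, forall j, ~~ incid (P i1) (L j)} -> {in A, forall i, ~~ incid (P i2) (L i)} ->
  (#|A| * #|B| + 2 <= s)%N.
Proof.
move=> ni hA hB hB' hA'.
pose g (x : 'I_d * 'I_d) := odflt i1 [pick k | cross (cross (L x.1) (L x.2)) (P k) == 0].
have nAB : forall i j, i \in A -> j \in B -> i != j.
  move=> i j iA jB; apply/eqP => e; subst j.
  by move: (hB' _ jB); rewrite hA.
have gs : forall x, x \in setX A B -> incid (P (g x)) (L x.1) && incid (P (g x)) (L x.2).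
  move=> [x1 x2]; rewrite inE /= => /andP[h1 h2].
  exact: (pt_spec i1 (nAB _ _ h1 h2)).
have inj : {in setX A B &, injective g}.
  move=> [x1 x2] [y1 y2] hx hy e.
  move: (gs _ hx) (gs _ hy); rewrite -e /= => /andP[kx1 kx2] /andP[ky1 ky2].
  move: hx hy; rewrite !inE /= => /andP[hx1 hx2] /andP[hy1 hy2].
  case: (eqVneq x1 y1) => [ex1|nx1]; last first.
    have pr := same_point nx1 kx1 ky1 (hA _ hx1) (hA _ hy1).
    by move: (hB' _ hx2); rewrite -(prop_incid _ pr) kx2.
  case: (eqVneq x2 y2) => [ex2|nx2]; last first.
    have pr := same_point nx2 kx2 ky2 (hB _ hx2) (hB _ hy2).
    by move: (hA' _ hx1); rewrite -(prop_incid _ pr) kx1.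
  by rewrite ex1 ex2.
have sub : g @: setX A B \subset ~: [set i1; i2].
  apply/subsetP => y /imsetP[[x1 x2] hx ->].
  move: (gs _ hx); move: hx; rewrite !inE /= => /andP[hx1 hx2] /andP[k1 k2].
  apply/negP => /orP[] /eqP e; rewrite e in k1 k2.
    by move: (hB' _ hx2); rewrite k2.
  by move: (hA' _ hx1); rewrite k1.
have := subset_leq_card sub.
rewrite (card_in_imset inj) cardsX.
have := cardsC [set i1; i2]; rewrite cards2 ni card_ord.
move=> e h; rewrite -e addnC leq_add2l; exact: h.
Qed.
End S.

Theorem lemma3 (K : fieldType) (d : nat) (L : 'I_d -> 'rV[K]_3)
    (s : nat) (P : 'I_s -> 'rV[K]_3) :
  line_config L ->
  enumerates_singular_points L P ->
  (2 <= s)%N ->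
  (forall k l : 'I_s, (k <= l)%N -> (mult L (P l) <= mult L (P k))%N) ->
  forall i1 i2 : 'I_s, nat_of_ord i1 = 0%N -> nat_of_ord i2 = 1%N ->
    ((~ exists j : 'I_d, incid (P i1) (L j) && incid (P i2) (L j)) ->
        (mult L (P i1) * mult L (P i2) + 2 <= s)%N)
    /\
    ((exists j : 'I_d, incid (P i1) (L j) && incid (P i2) (L j)) ->
        ((mult L (P i1) - 1) * (mult L (P i2) - 1) + 2 <= s)%N).
Proof.
move=> hL hP _ _ i1 i2 h1 h2.
have ni : i1 != i2 by apply/eqP => e; rewrite e h2 in h1.
split.
  move=> nc; rewrite /mult.
  apply: (core hL hP ni).
  - by move=> i; rewrite inE.
  - by move=> i; rewrite inE.
  - move=> j; rewrite inE => hj; apply/negP => hj'; apply: nc; exists j; by rewrite hj hj'.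
  - move=> j; rewrite inE => hj; apply/negP => hj'; apply: nc; exists j; by rewrite hj hj'.
case=> C /andP[c1 c2]; rewrite /mult.
set A := [set i | incid (P i1) (L i)]; set B := [set i | incid (P i2) (L i)].
have CA : C \in A by rewrite inE.
have CB : C \in B by rewrite inE.
rewrite (cardsD1 C A) (cardsD1 C B) CA CB !add1n !subSS !subn0.
apply: (core hL hP ni).
- by move=> i; rewrite !inE => /andP[_ ->].
- by move=> i; rewrite !inE => /andP[_ ->].
- move=> j; rewrite !inE => /andP[nj hj]; apply/negP => hj'.
  by move/eqP: nj; apply; apply: (same_line hL hP ni hj' hj c1 c2).
- move=> j; rewrite !inE => /andP[nj hj]; apply/negP => hj'.
  by move/eqP: nj; apply; apply: (same_line hL hP ni hj hj' c1 c2).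
Qed.
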